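(* Let $A$ be a finite nonempty set, $M\subseteq A^A$, and let $\emptyset\ne B\subsetneq A$ be invariant under $M$ (i.e., $g(B)\subseteq B$ for all $g\in M$). Then $\mathrm{gQuord}_B(M\restriction_B)=(\mathrm{gQuord}_A M)\restriction_B$.
   Context: $M\restriction_B:=\{g\restriction_B\mid g\in M\}\subseteq B^B$; for a relation $\rho\subseteq A^m$, $\rho\restriction_B:=\rho\cap B^m$, and for a set $Q$ of relations, $Q\restriction_B:=\{\rho\restriction_B\mid\rho\in Q\}$. A relation $\rho\subseteq X^m$ is a generalized quasiorder on $X$ if it is reflexive ($(x,\dots,x)\in\rho$ for all $x\in X$) and for every $m\times m$-matrix over $X$ whose rows and columns all lie in $\rho$, its diagonal lies in $\rho$. $\mathrm{gQuord}_X N$ is the set of all generalized quasiorders on $X$ preserved by every $h\in N\subseteq X^X$ (i.e., $h$ maps tuples of $\rho$ componentwise into $\rho$). *)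

(* Defs.v *)
From mathcomp Require Import all_boot.
Set Implicit Arguments. Unset Strict Implicit. Unset Printing Implicit Defensive.

Definition reflexive_rel (X : finType) (m : nat) (rho : {set m.-tuple X}) : Prop :=
  forall x : X, [tuple x | _ < m] \in rho.

Definition diag_closed (X : finType) (m : nat) (rho : {set m.-tuple X}) : Prop :=
  forall Mx : 'I_m -> 'I_m -> X,
    (forall i : 'I_m, [tuple Mx i j | j < m] \in rho) ->
    (forall j : 'I_m, [tuple Mx i j | i < m] \in rho) ->
    [tuple Mx i i | i < m] \in rho.

Definition gen_quasiorder (X : finType) (m : nat) (rho : {set m.-tuple X}) : Prop :=
  reflexive_rel rho /\ diag_closed rho.

Definition preserves (X : finType) (m : nat) (h : X -> X) (rho : {set m.-tuple X}) : Prop :=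
  forall t, t \in rho -> map_tuple h t \in rho.

Definition gQuord (X : finType) (N : {set {ffun X -> X}}) (m : nat)
  (rho : {set m.-tuple X}) : Prop :=
  gen_quasiorder rho /\ forall h, h \in N -> preserves h rho.

Definition subT (A : finType) (B : {set A}) : finType := {x : A | x \in B}.

Definition restr_maps (A : finType) (B : {set A}) (M : {set {ffun A -> A}})
  : {set {ffun subT B -> subT B}} :=
  [set h : {ffun subT B -> subT B} |
     [exists g in M, [forall x : subT B, val (h x) == g (val x)]]].

Definition restr_rel (A : finType) (B : {set A}) (m : nat) (rho : {set m.-tuple A})
  : {set m.-tuple (subT B)} :=
  [set t : m.-tuple (subT B) | map_tuple val t \in rho].

Definition invariant_under (A : finType) (B : {set A}) (M : {set {ffun A -> A}}) : Prop :=
  forall g, g \in M -> forall x, x \in B -> g x \in B.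

(* Main.v *)
Require Import Defs.
From mathcomp Require Import all_boot.
Set Implicit Arguments. Unset Strict Implicit. Unset Printing Implicit Defensive.

Lemma map_mk (T U : Type) (f : T -> U) m (F : 'I_m -> T) :
  map_tuple f [tuple F i | i < m] = [tuple f (F i) | i < m].
Proof. by apply: eq_from_tnth => i; rewrite tnth_map !tnth_mktuple. Qed.

Section Constr.
Variables (A : finType) (M : {set {ffun A -> A}}) (B : {set A}).
Hypothesis Bn0 : B != set0.
Hypothesis inv : invariant_under B M.
Variables (m : nat) (sigma : {set m.-tuple (subT B)}).

Definition rho : {set m.-tuple A} :=
  [set t | [exists s in sigma, t == map_tuple val s] || [exists a, t == [tuple a | _ < m]]].

Lemma rho_cases t : t \in rho ->
  (forall i, tnth t i \in B) \/ (exists a, a \notin B /\ forall i, tnth t i = a).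
Proof.
rewrite inE => /orP [/existsP [s /andP [_ /eqP ->]] | /existsP [a /eqP ->]].
  by left => i; rewrite tnth_map; apply: (valP (tnth s i)).
case: (boolP (a \in B)) => aB.
  by left => i; rewrite tnth_mktuple.
by right; exists a; split => // i; rewrite tnth_mktuple.
Qed.

Lemma restr_rho (refl : reflexive_rel sigma) : restr_rel B rho = sigma.
Proof.
apply/setP => s; rewrite inE inE.
apply/idP/idP.
  case/orP => [/existsP [s' /andP [s'S /eqP E]] | /existsP [a /eqP E]].
    have -> : s = s'.
      apply: eq_from_tnth => i; apply: val_inj.
      have := congr1 (fun u => tnth u i) E; by rewrite /= !tnth_map.
    done.
  have [b0 b0B] : exists b, b \in B by apply/set0Pn.
  have [b Hb] : exists b : subT B, forall i, tnth s i = b.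
    case: m s E => [|n] s E.
      by exists (exist _ b0 b0B) => [[]].
    exists (tnth s ord0) => i; apply: val_inj.
    have E1 := congr1 (fun u => tnth u i) E; have E2 := congr1 (fun u => tnth u ord0) E.
    move: E1 E2; rewrite /= !tnth_map ?tnth_mktuple => -> -> //.
  have -> : s = [tuple b | _ < m].
    by apply: eq_from_tnth => i; rewrite tnth_mktuple.
  exact: refl.
move=> sS; apply/orP; left; apply/existsP; exists s; by rewrite sS eqxx.
Qed.

Lemma rho_gq (H : gQuord (restr_maps B M) sigma) : gQuord M rho.
Proof.
case: H => [[refl dc] pres].
have RR := restr_rho refl.
split; first split.
- move=> x; rewrite inE; apply/orP; right; apply/existsP; exists x; done.
- move=> Mx rows cols.
  case: (boolP [exists i, exists j, Mx i j \notin B]).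
    case/existsP => i0 /existsP [j0 nB].
    case: (rho_cases (rows i0)) => [allB | [a [anB Ha]]].
      by move: (allB j0); rewrite tnth_mktuple (negbTE nB).
    have Hall : forall k j, Mx k j = a.
      move=> k j.
      have e : Mx i0 j = a by move: (Ha j); rewrite tnth_mktuple.
      case: (rho_cases (cols j)) => [allB | [a' [_ Ha']]].
        by move: (allB i0); rewrite tnth_mktuple e (negbTE anB).
      move: (Ha' k) (Ha' i0); rewrite !tnth_mktuple => -> e'.
      by rewrite -e' e.
    have -> : [tuple Mx i i | i < m] = [tuple a | _ < m].
      by apply: eq_from_tnth => i; rewrite !tnth_mktuple Hall.
    rewrite inE; apply/orP; right; apply/existsP; exists a; done.
  rewrite negb_exists => /forallP allB.
  have inB : forall i j, Mx i j \in B.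
    by move=> i j; move: (allB i); rewrite negb_exists => /forallP /(_ j); rewrite negbK.
  pose Mx' i j : subT B := exist _ (Mx i j) (inB i j).
  have D : [tuple Mx' i i | i < m] \in sigma.
    apply: dc => [i|j]; rewrite -RR inE map_mk /=.
      exact: rows.
    exact: cols.
  by move: D; rewrite -RR inE map_mk.
- move=> h hM t; rewrite inE => /orP [/existsP [s /andP [sS /eqP ->]] | /existsP [a /eqP ->]].
    pose h' : {ffun subT B -> subT B} :=
      [ffun x : subT B => (exist _ (h (val x)) (inv hM (valP x)) : subT B)].
    have h'M : h' \in restr_maps B M.
      rewrite inE; apply/existsP; exists h; rewrite hM /=; apply/forallP => x.
      by rewrite ffunE.
    have s'S := pres h' h'M s sS.
    rewrite inE; apply/orP; left; apply/existsP; exists (map_tuple h' s).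
    rewrite s'S /=; apply/eqP; apply: eq_from_tnth => i.
    by rewrite !tnth_map ffunE.
  rewrite map_mk inE; apply/orP; right; apply/existsP; exists (h a); done.
Qed.

End Constr.

Theorem proposition4p8 (A : finType) (M : {set {ffun A -> A}}) (B : {set A}) :
  0 < #|A| ->
  B != set0 -> B \proper [set: A] ->
  invariant_under B M ->
  forall (m : nat) (sigma : {set m.-tuple (subT B)}),
    gQuord (restr_maps B M) sigma <->
    exists rho : {set m.-tuple A}, gQuord M rho /\ sigma = restr_rel B rho.
Proof.
move=> _ Bn0 _ inv m sigma; split.
  move=> H; exists (rho sigma); split; first exact: (rho_gq Bn0 inv H).
  by case: H => [[refl _] _]; rewrite restr_rho.
case=> r [[[refl dc] pres] ->].
split; first split.
- by move=> x; rewrite inE map_mk; exact: (refl (val x)).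
- move=> Mx rows cols; rewrite inE map_mk.
  apply: (dc (fun i j => val (Mx i j))) => [i|j].
    by move: (rows i); rewrite inE map_mk.
  by move: (cols j); rewrite inE map_mk.
- move=> h; rewrite inE => /existsP [g /andP [gM /forallP Hg]] t; rewrite !inE => tr.
  have -> : map_tuple val (map_tuple h t) = map_tuple g (map_tuple val t).
    by apply: eq_from_tnth => i; rewrite !tnth_map (eqP (Hg _)).
  exact: pres.
Qed.
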